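(* Let $N\ge1$, and let $q,t$ be parameters. For $n\in\mathbb{Z}$ define the generalized Macdonald operator $$\mathcal M_{1,n}=\sum_{i=1}^{N}x_i^{\,n}\prod_{j\neq i}\frac{t x_i-x_j}{x_i-x_j}\,\Gamma_i,$$ where $(\Gamma_if)(x_1,\dots,x_N)=f(\dots,qx_i,\dots)$, and the current $\mathfrak e(z)=\frac{q^{1/2}}{1-q}\sum_{n\in\mathbb{Z}}q^{n/2}z^n\mathcal M_{1,n}$. Then, as formal series in $z^{\pm1},w^{\pm1}$ with operator coefficients, $$g(z,w)\,\mathfrak e(z)\mathfrak e(w)+g(w,z)\,\mathfrak e(w)\mathfrak e(z)=0,\qquad g(z,w)=(z-qw)(z-t^{-1}w)(z-q^{-1}tw).$$
   Context: The operators act on symmetric functions in $x_1,\dots,x_N$. This is the $\mathfrak e\mathfrak e$ exchange relation of the Ding–Iohara–Miki (quantum toroidal $\mathfrak{gl}_1$) algebra. *)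

(* Defs.v *)
From HB Require Import structures.
From mathcomp Require Import all_boot all_order all_algebra all_fingroup.
Set Implicit Arguments. Unset Strict Implicit. Unset Printing Implicit Defensive.
Import Order.TTheory GRing.Theory Num.Theory.
Local Open Scope ring_scope.

Definition Gam (K : fieldType) (q : K) (N : nat) (i : 'I_N) (x : 'I_N -> K)
  : 'I_N -> K := fun j => if j == i then q * x j else x j.

Definition Mop (K : fieldType) (q t : K) (N : nat) (n : int)
  (f : ('I_N -> K) -> K) : ('I_N -> K) -> K :=
  fun x => \sum_(i < N) (x i ^ n *
     (\prod_(j < N | j != i) ((t * x i - x j) / (x i - x j))) * f (Gam q i x)).

(* Coefficient of z^n in e(z) = s/(1-q) sum_n s^n z^n M_{1,n}, s = q^{1/2}. *)
Definition ecoef (K : fieldType) (s q t : K) (N : nat) (n : int)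
  (f : ('I_N -> K) -> K) : ('I_N -> K) -> K :=
  fun x => s / (1 - q) * s ^ n * Mop q t n f x.

(* h(X) = (X - q)(X - t^-1)(X - q^-1 t), so that
   g(z,w) = (z - q w)(z - t^-1 w)(z - q^-1 t w) = sum_k h_k z^k w^(3-k). *)
Definition gpoly (K : fieldType) (q t : K) : {poly K} :=
  ('X - q%:P) * ('X - (t^-1)%:P) * ('X - (q^-1 * t)%:P).

Definition symmetric_fun (K : fieldType) (N : nat) (f : ('I_N -> K) -> K) :=
  forall (s : 'S_N) (x : 'I_N -> K), f (fun j => x (s j)) = f x.

(* Points where all denominators occurring are nonzero. *)
Definition generic_pt (K : fieldType) (q : K) (N : nat) (x : 'I_N -> K) :=
  (forall i, x i != 0) /\
  (forall i j : 'I_N, i != j -> x i != x j /\ x j != q * x i).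

(* Main.v *)
Require Import Defs.
From HB Require Import structures.
From mathcomp Require Import all_boot all_order all_algebra all_fingroup.
From mathcomp Require Import ring lra zify.
From Stdlib Require Import FunctionalExtensionality.
Import Order.TTheory GRing.Theory Num.Theory.
Local Open Scope ring_scope.

Section Aux.
Variables (K : fieldType) (N : nat) (q t s : K).

Definition Pf (i : 'I_N) (x : 'I_N -> K) :=
  \prod_(j < N | j != i) ((t * x i - x j) / (x i - x j)).

Lemma ecoef2 a b (F : ('I_N -> K) -> K) x :
  ecoef s q t a (ecoef s q t b F) x =
  \sum_(i < N) \sum_(l < N) (s / (1 - q)) ^+ 2 *
     ((s * x i) ^ a * (s * Gam q i x l) ^ b) * (Pf i x * Pf l (Gam q i x))
     * F (Gam q l (Gam q i x)).
Proof.
rewrite /ecoef /Mop !mulr_sumr; apply: eq_bigr => i _.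
rewrite !mulr_sumr; apply: eq_bigr => l _.
rewrite /Pf !expfzMl; ring.
Qed.

Lemma swap3 (a : 'I_4 -> K) (T : 'I_4 -> 'I_N -> 'I_N -> K) :
  \sum_(k < 4) a k * (\sum_(i < N) \sum_(l < N) T k i l) =
  \sum_(i < N) \sum_(l < N) \sum_(k < 4) a k * T k i l.
Proof.
under eq_bigr => k _ do rewrite mulr_sumr.
rewrite exchange_big; apply: eq_bigr => i _.
under eq_bigr => k _ do rewrite mulr_sumr.
by rewrite exchange_big.
Qed.

Lemma shiftz (a b : K) (A B : int) (k : nat) : a != 0 -> b != 0 ->
  a ^ (A - k%:Z) * b ^ (B - (3 - k%:Z)) =
  a ^ (A - 3) * b ^ (B - 3) * (a ^+ 3 * (b / a) ^+ k).
Proof.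
move=> ha hb.
have e1 : A - k%:Z = (A - 3) + (3%:Z + (- k%:Z)) by ring.
have e2 : B - (3 - k%:Z) = (B - 3) + k%:Z by ring.
rewrite e1 e2 !expfzDr // -exprnN exprMn exprVn.
rewrite -!exprnP; ring.
Qed.

Lemma size_g : (size (gpoly q t) <= 4)%N.
Proof.
rewrite /gpoly; apply: leq_trans (size_polyMleq _ _) _; rewrite size_XsubC.
have := size_polyMleq ('X - q%:P) ('X - (t^-1)%:P); rewrite !size_XsubC /= => h.
by rewrite addn2.
Qed.

Lemma ksum (C D E a b : K) (A B : int) : a != 0 -> b != 0 ->
  \sum_(k < 4) (gpoly q t)`_k * (C * (a ^ (A - k%:Z) * b ^ (B - (3 - k%:Z))) * D * E)
  = C * D * E * a ^ (A - 3) * b ^ (B - 3) * a ^+ 3 *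
    ((b / a - q) * (b / a - t^-1) * (b / a - q^-1 * t)).
Proof.
move=> ha hb.
have -> : (b / a - q) * (b / a - t^-1) * (b / a - q^-1 * t) = (gpoly q t).[b / a].
  by rewrite /gpoly !hornerE.
rewrite (horner_coef_wide _ size_g) !mulr_sumr; apply: eq_bigr => k _.
rewrite shiftz //; ring.
Qed.

Lemma Gam_comm (i l : 'I_N) (x : 'I_N -> K) :
  Gam q l (Gam q i x) = Gam q i (Gam q l x).
Proof.
apply: functional_extensionality => j; rewrite /Gam.
by case: (j == l); case: (j == i).
Qed.

Lemma Pf_split (i l : 'I_N) x : i != l ->
  Pf i x = (t * x i - x l) / (x i - x l) *
     \prod_(j < N | (j != i) && (j != l)) ((t * x i - x j) / (x i - x j)).
Proof. by move=> hil; rewrite /Pf (bigD1 l) // eq_sym. Qed.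

Lemma Pf_G (i l : 'I_N) x : i != l ->
  Pf l (Gam q i x) = (t * x l - q * x i) / (x l - q * x i) *
     \prod_(j < N | (j != l) && (j != i)) ((t * x l - x j) / (x l - x j)).
Proof.
move=> hil; rewrite /Pf (bigD1 i) //=.
have hli : (l == i) = false by apply/negbTE; rewrite eq_sym.
congr (_ * _); first by rewrite /Gam eqxx hli.
apply: eq_bigr => j /andP[hjl hji]; by rewrite /Gam (negbTE hji) hli.
Qed.

End Aux.

(* Coefficient of z^A w^B of g(z,w) e(z)e(w) + g(w,z) e(w)e(z), applied to f at x. *)
Theorem mainTheorem8 (K : fieldType) (N : nat) (q t s : K)
  (hN : (0 < N)%N) (hq0 : q != 0) (hq1 : q != 1) (ht0 : t != 0) (hs : s ^+ 2 = q)
  (A B : int) (f : ('I_N -> K) -> K) (hf : symmetric_fun f)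
  (x : 'I_N -> K) (hx : generic_pt q x) :
  \sum_(k < 4)
     (gpoly q t)`_k *
       (ecoef s q t (A - k%:Z) (ecoef s q t (B - (3 - k%:Z)) f) x
      + ecoef s q t (B - k%:Z) (ecoef s q t (A - (3 - k%:Z)) f) x) = 0.
Proof.
case: hx => hx0 hxd.
have hs0 : s != 0 by apply: contraNneq hq0 => s0; rewrite -hs s0 expr0n.
have hqm : 1 - q != 0 by rewrite subr_eq0 eq_sym.
have hn1 : forall i, s * x i != 0 by move=> i; rewrite mulf_neq0.
have hn2 : forall i l, s * Gam q i x l != 0.
  move=> i l; rewrite /Gam; case: (l == i); by rewrite !mulf_neq0.
under eq_bigr => k _ do rewrite !ecoef2 mulrDr.
rewrite big_split /= !swap3 [X in _ + X]exchange_big -big_split /=.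
apply: big1 => i _; rewrite -big_split /=; apply: big1 => l _.
rewrite !ksum //.
case: (eqVneq i l) => [<- | hil].
  have -> : s * Gam q i x i / (s * x i) = q.
    by rewrite /Gam eqxx; field; rewrite hx0.
  by rewrite subrr !(mulr0, mul0r) addr0.
have hli : l != i by rewrite eq_sym.
have [hd1 hd2] := hxd _ _ hil.
have [hd3 hd4] := hxd _ _ hli.
rewrite (@Pf_G _ _ q t i l) // (@Pf_G _ _ q t l i) // (@Pf_split _ _ t i l x) // (@Pf_split _ _ t l i x) //.
rewrite Gam_comm.
have -> : Gam q i x l = x l by rewrite /Gam (negbTE hli).
have -> : Gam q l x i = x i by rewrite /Gam (negbTE hil).
set S1 := \prod_(j < N | _) _.
set S2 := \prod_(j < N | _) _.
set fv := f _.
set a1 := (s * x i) ^ (A - 3).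
set b1 := (s * x l) ^ (B - 3).
have h1 : x i - x l != 0 by rewrite subr_eq0.
have h2 : x l - x i != 0 by rewrite subr_eq0.
have h3 : x l - q * x i != 0 by rewrite subr_eq0.
have h4 : x i - q * x l != 0 by rewrite subr_eq0.
have h5 := hx0 i. have h6 := hx0 l.
field.
by rewrite hq0 h6 hs0 ht0 h4 h2 hqm h5 h3 h1.
Qed.
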